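(* Let $G$ be a group and $H\le G$ a subnormal subgroup of finite index. If $q$ is a prime dividing $[G:H]$, then there exists $g\in G$ with $\mathrm{ord}_H(g)=q$.
   Context: $H$ is subnormal in $G$ if there is a chain $H=H_0\le H_1\le\dots\le H_m=G$ with each $H_j$ normal in $H_{j+1}$. For $g\in G$, the relative order is $\mathrm{ord}_H(g)=\min\{n>0\mid g^n\in H\}$. *)

(* Defs.v *)
From mathcomp Require Import all_boot.
Set Implicit Arguments. Unset Strict Implicit. Unset Printing Implicit Defensive.

Record group := Group {
  carrier :> Type;
  gmul : carrier -> carrier -> carrier;
  gone : carrier;
  ginv : carrier -> carrier;
  gmulA : forall x y z, gmul x (gmul y z) = gmul (gmul x y) z;
  gmul1 : forall x, gmul gone x = x;
  gmulV : forall x, gmul (ginv x) x = gone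
}.

Fixpoint gpow (G : group) (x : G) (n : nat) : G :=
  match n with 0 => gone G | S k => gmul x (gpow x k) end.

Definition is_subgroup (G : group) (H : G -> Prop) : Prop :=
  H (gone G) /\ (forall x y, H x -> H y -> H (gmul x y)) /\ (forall x, H x -> H (ginv x)).

Definition normal_in (G : group) (K L : G -> Prop) : Prop :=
  is_subgroup K /\ is_subgroup L /\ (forall x, K x -> L x) /\
  (forall l k, L l -> K k -> K (gmul (ginv l) (gmul k l))).

Inductive subnormal (G : group) : (G -> Prop) -> Prop :=
  | subnormal_top : forall H : G -> Prop, (forall x, H x) -> subnormal H
  | subnormal_step : forall H K : G -> Prop,
      normal_in H K -> subnormal K -> subnormal H.

(* [G : H] = n : there is a left transversal of H in G with n elements,
   i.e. G is the disjoint union of the n left cosets (r i) H. *)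
Definition has_index (G : group) (H : G -> Prop) (n : nat) : Prop :=
  exists r : 'I_n -> G, forall g : G, exists! i : 'I_n, H (gmul (ginv (r i)) g).

Definition rel_order_is (G : group) (H : G -> Prop) (g : G) (n : nat) : Prop :=
  0 < n /\ H (gpow g n) /\ (forall m, 0 < m -> m < n -> ~ H (gpow g m)).

(* Main.v *)
Require Import Defs.
From mathcomp Require Import all_boot all_fingroup all_solvable.
From mathcomp Require Import boolp.
Set Implicit Arguments. Unset Strict Implicit. Unset Printing Implicit Defensive.

Section KeyS.
Local Open Scope group_scope.


Lemma key (gT : finGroupType) (Q T P : {group gT}) q :
  prime q -> T \subset Q -> q.-Sylow(Q) P -> q.-Sylow(T) (T :&: P) ->
  (q %| #|Q : T|)%N ->
  exists2 x, x \in Q & (x ^+ q \in T /\ forall m, (0 < m < q)%N -> x ^+ m \notin T).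
Proof.
move=> pq sTQ sylP sylTP dq.
have nPT : ~~ (P \subset T).
  apply/negP=> sPT.
  have eP : T :&: P = P by apply/setIidPr.
  have c1 := card_Hall sylP; have c2 : #|P| = (#|T|`_q)%N by rewrite -eP; exact: card_Hall sylTP.
  have := Lagrange sTQ; move=> LQ.
  have i0 : (0 < #|Q : T|)%N by [].
  have t0 : (0 < #|T|)%N by [].
  move: c1; rewrite -LQ partnM // c2 => c1.
  have h1 : (#|Q : T|`_q)%N = 1%N.
    apply/eqP; rewrite -(eqn_pmul2l (part_gt0 q #|T|)) muln1 -c1 //.
  move/eqP: h1; rewrite p_part_eq1 mem_primes pq i0 dq.
  by [].
have [y yP yT] := subsetPn nPT.
have yQ : y \in Q by apply: (subsetP (pHall_sub sylP)).
have qy : q.-elt y := mem_p_elt (pHall_pgroup sylP) yP.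
have [e he] := p_natP qy.
have ex : exists j, y ^+ (q ^ j) \in T by exists e; rewrite -he expg_order group1.
case: (ex_minnP ex) => j hj hmin.
have j0 : (0 < j)%N.
  by rewrite lt0n; apply/negP=> /eqP j0; move: hj; rewrite j0 expn0 expg1 (negbTE yT).
pose x := y ^+ (q ^ j.-1).
have xq : x ^+ q \in T by rewrite /x -expgnA -expnSr prednK.
have xT : x \notin T.
  apply/negP=> xT; have := hmin _ xT; rewrite leqNgt.
  by rewrite prednK ?leqnn //= ltn_predL j0.
exists x; first by rewrite groupX.
split=> // m /andP[m0 mq]; apply/negP=> xm.
have q0 : (0 < q)%N := prime_gt0 pq.
have [u _ hu] := Bezoutl m q0.
have cop : gcdn q m = 1%N.
  apply/eqP; rewrite -/(coprime q m) prime_coprime //; apply/negP=> /dvdn_leq.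
  by move=> /(_ m0); rewrite leqNgt mq.
rewrite cop in hu.
have := divnK hu; set c := (_ %/ q)%N => hc.
have : x ^+ (1 + u * m) \in T by rewrite -hc mulnC expgnA groupX.
have xmu : (x ^+ m) ^+ u \in T by apply: groupX.
rewrite expgnDr expg1 mulnC expgnA (groupMr _ xmu).
by apply/negP.
Qed.

End KeyS.

Section GA.
Variable G : Defs.group.
Local Notation "x * y" := (gmul x y).
Local Notation "1" := (gone G).
Local Notation "x ^-1" := (ginv x).

Lemma solveL (a x b : G) : a * x = b -> x = a^-1 * b.
Proof. by move=> <-; rewrite gmulA gmulV gmul1. Qed.

Lemma gmulVr (x : G) : x * x^-1 = 1.
Proof.
rewrite -[LHS]gmul1 -{1}(gmulV (x^-1)) -gmulA [x^-1 * (x * x^-1)]gmulA.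
by rewrite gmulV gmul1 gmulV.
Qed.

Lemma gmul1r (x : G) : x * 1 = x.
Proof. by rewrite -(gmulV x) gmulA gmulVr gmul1. Qed.

Lemma ginvK (x : G) : (x^-1)^-1 = x.
Proof. by have h := solveL (gmulV x); rewrite gmul1r in h; rewrite -h. Qed.

Lemma ginvM (x y : G) : (x * y)^-1 = y^-1 * x^-1.
Proof.
have h : (x * y) * (y^-1 * x^-1) = 1.
  by rewrite gmulA -[x * y * y^-1]gmulA gmulVr gmul1r gmulVr.
by rewrite (solveL h) gmul1r.
Qed.

Lemma ginv1 : 1^-1 = 1.
Proof. by rewrite -[LHS]gmul1r gmulV. Qed.


Variable H : G -> Prop.
Hypothesis hH : is_subgroup H.
Variable n : nat.
Variable r : 'I_n -> G.
Hypothesis hr : forall g : G, exists! i : 'I_n, H (gmul (ginv (r i)) g).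

Lemma H1 : H 1. Proof. by case: hH. Qed.
Lemma HM x y : H x -> H y -> H (x * y). Proof. by case: hH => _ []; auto. Qed.
Lemma HV x : H x -> H (x^-1). Proof. by case: hH => _ []; auto. Qed.

Definition cidx (g : G) : 'I_n := proj1_sig (cid (hr g)).
Lemma cidxP g : H ((r (cidx g))^-1 * g).
Proof. by rewrite /cidx; case: (cid (hr g)) => i [] /=. Qed.
Lemma cidx_uniq g i : H ((r i)^-1 * g) -> cidx g = i.
Proof. by rewrite /cidx; case: (cid (hr g)) => j [] /= _; apply. Qed.

Lemma cidx_r i : cidx (r i) = i.
Proof. by apply: cidx_uniq; rewrite gmulV; exact: H1. Qed.

Lemma Hquot (k : 'I_n) a b : H ((r k)^-1 * a) -> H ((r k)^-1 * b) -> H (a^-1 * b).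
Proof.
move=> ha hb; have := HM (HV ha) hb.
by rewrite ginvM ginvK -gmulA (gmulA (r k)) gmulVr gmul1.
Qed.

Definition pif (g : G) (i : 'I_n) : 'I_n := cidx (g^-1 * r i).

Lemma pif_inj g : injective (pif g).
Proof.
move=> i j e; have h1 := cidxP (g^-1 * r i); have h2 := cidxP (g^-1 * r j).
rewrite /pif in e; rewrite e in h1.
have := Hquot h1 h2; rewrite ginvM -gmulA (gmulA (g^-1^-1)) gmulV gmul1 => h.
by have := cidx_uniq h; rewrite cidx_r.
Qed.

Definition pi (g : G) : {perm 'I_n} := perm (@pif_inj g).

Lemma piE g i : pi g i = cidx (g^-1 * r i).
Proof. by rewrite permE. Qed.

Lemma piM g h : pi (g * h) = (pi g * pi h)%g.
Proof.
apply/permP => i; rewrite permM !piE.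
set j := cidx (g^-1 * r i).
apply: cidx_uniq.
have := HM (cidxP (h^-1 * r j)) (cidxP (g^-1 * r i)); rewrite -/j.
by rewrite ginvM !gmulA -[_ * r j * (r j)^-1]gmulA gmulVr gmul1r.
Qed.

Lemma pi1 : pi 1 = 1%g.
Proof. by apply/permP => i; rewrite piE perm1 ginv1 gmul1 cidx_r. Qed.

Lemma piV g : pi (g^-1) = ((pi g)^-1)%g.
Proof.
apply: (mulgI (pi g)); by rewrite -piM gmulVr pi1 mulgV.
Qed.

Lemma piX g m : pi (gpow g m) = ((pi g) ^+ m)%g.
Proof. by elim: m => [|m IH] /=; rewrite ?pi1 // piM IH expgS. Qed.


Definition Im (K : G -> Prop) : {set {perm 'I_n}} :=
  [set p | `[< exists g, K g /\ pi g = p >]].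
Definition ImG K := <<Im K>>%G.

Lemma memIm K p : (p \in Im K) <-> exists g, K g /\ pi g = p.
Proof. by rewrite inE; split => /asboolP. Qed.

Lemma Im_gs K : is_subgroup K -> group_set (Im K).
Proof.
case=> K1 [KM KV]; apply/group_setP; split.
  by apply/memIm; exists 1; split => //; rewrite pi1.
move=> x y /memIm[a [Ka <-]] /memIm[b [Kb <-]].
by apply/memIm; exists (a * b); split; [apply: KM | rewrite piM].
Qed.

Lemma memImG K p : is_subgroup K -> (p \in ImG K) <-> exists g, K g /\ pi g = p.
Proof. by move=> sK; rewrite /ImG /= gen_set_id ?memIm //; apply: Im_gs. Qed.

Lemma ImG_sub K L : is_subgroup K -> is_subgroup L -> (forall x, K x -> L x) ->
  ImG K \subset ImG L.
Proof.
move=> sK sL KL; apply/subsetP => p /(memImG _ sK) [g [Kg <-]].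
by apply/(memImG _ sL); exists g; split => //; apply: KL.
Qed.

Lemma ImG_normal K L : normal_in K L -> (ImG K <| ImG L)%g.
Proof.
case=> sK [sL [KL nKL]]; apply/normalP; split; first exact: ImG_sub.
move=> x /(memImG _ sL) [l [Ll <-]].
apply/eqP; rewrite eqEcard cardJg leqnn andbT.
apply/subsetP => y; rewrite mem_conjg => /(memImG _ sK) [k [Kk ek]].
have -> : y = ((pi k) ^ (pi l))%g by rewrite ek conjgKV.
apply/(memImG _ sK); exists (l^-1 * (k * l)); split; first by apply: nKL.
by rewrite !piM piV.
Qed.


Definition Top : G -> Prop := fun _ => True.
Lemma Top_sub : is_subgroup Top. Proof. by []. Qed.

Lemma sylow_chain q (P : {group {perm 'I_n}}) K :
  Defs.subnormal K -> (q.-Sylow(ImG Top) P)%g -> (q.-Sylow(ImG K) (ImG K :&: P))%g.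
Proof.
move=> hK sylP; elim: hK => [K0 hK0 | K1 L nKL _ IH].
  have -> : ImG K0 = ImG Top.
    apply/group_inj; rewrite /ImG /=; congr (<< _ >>)%g; apply/setP => p.
    by apply/idP/idP => /memIm [g [_ <-]]; apply/memIm; exists g.
  by rewrite (setIidPr (pHall_sub sylP)).
have nKL' := ImG_normal nKL.
have := Sylow_setI_normal nKL' IH; rewrite setIA (setIidPl (normal_sub nKL')).
by [].
Qed.

Definition i0 := cidx 1.
Lemma h0H : H (r i0).
Proof. by have := HV (cidxP 1); rewrite gmul1r ginvK. Qed.

Lemma fixP g : pi g i0 = i0 <-> H g.
Proof.
rewrite piE; split.
  move=> e; have := cidxP (g^-1 * r i0); rewrite e => h.
  have := HM (HM h0H h) (HV h0H).
  rewrite !gmulA gmulVr gmul1 -gmulA gmulVr gmul1r => /HV; by rewrite ginvK.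
move=> Hg; apply: cidx_uniq; apply: HM; first exact: HV h0H.
by apply: HM; [apply: HV | apply: h0H].
Qed.

Lemma memT g : (pi g \in ImG H) <-> H g.
Proof.
split; last by move=> Hg; apply/(memImG _ hH); exists g.
move=> /(memImG _ hH) [h [Hh e]]; apply/fixP; rewrite -e; exact/fixP.
Qed.

Lemma stabE : ('C_(ImG Top)[i0 | 'P])%g = ImG H.
Proof.
apply/setP => p; rewrite in_setI; apply/andP/idP.
  move=> [/(memImG _ Top_sub) [g [_ <-]] /astab1P] /=.
  by move/fixP/memT.
move=> pT; have := pT; move/(memImG _ hH) => [g [Hg e]]; split.
  by apply/(memImG _ Top_sub); exists g.
by apply/astab1P; rewrite /= ?apermE -e; apply/fixP.
Qed.

Lemma orbitE : orbit 'P (ImG Top) i0 = [set: 'I_n].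
Proof.
apply/setP => j; rewrite inE; apply/orbitP.
exists (pi ((r j * (r i0)^-1)^-1)); first by apply/(memImG _ Top_sub); eexists.
by rewrite /= ?apermE piE ginvK -gmulA gmulV gmul1r cidx_r.
Qed.

Lemma indexE : #|ImG Top : ImG H|%g = n.
Proof. by rewrite -stabE -card_orbit orbitE cardsT card_ord. Qed.

End GA.

Theorem mainTheorem11 (G : Defs.group) (H : G -> Prop) (n q : nat) :
  is_subgroup H -> Defs.subnormal H -> has_index H n ->
  prime q -> q %| n ->
  exists g : G, rel_order_is H g q.
Proof.
move=> hH hK [r hr] pq dq.
have [P sylP] := Sylow_exists q (ImG hH hr (@Top G)).
have sTQ := ImG_sub hH hr hH (@Top_sub G) (fun x _ => I).
have sylTP := sylow_chain hK sylP.
have := key pq sTQ sylP sylTP; rewrite (indexE hH hr) => /(_ dq) [x xQ [xq xm]].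
have [g [_ eg]] := (memImG hH hr x (@Top_sub G)).1 xQ.
exists g; split; first exact: prime_gt0.
split; first by apply/(memT hH hr); rewrite (piX hH hr) eg.
move=> m m0 mq; move/(memT hH hr); rewrite (piX hH hr) eg; apply/negP; apply: xm.
by rewrite m0 mq.
Qed.
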